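(* For every positive integer $n$ and every $\beta\ge 0$, there is a temporal graph $G$ on $n$ vertices and a source vertex $s$ of $G$ such that every single-source temporal $\beta$-additive spanner of $G$ with respect to $s$ has size $\Omega\big(\frac{n^2}{1+\beta}\big)$.
   Context: A temporal graph is an undirected graph $G=(V,E)$ with a labeling $\lambda:E\to\mathbb{N}^+$. A temporal path is a path whose traversed edges have non-decreasing labels in the order of traversal; its length is its number of edges, and $d_G(u,v)$ is the minimum length of a temporal path from $u$ to $v$ in $G$ ($+\infty$ if none). A single-source temporal $\beta$-additive spanner of $G$ w.r.t. $s$ is a subgraph $H$ with $V(H)=V$, $E(H)\subseteq E$ (same labels), such that $d_H(s,v)\le d_G(s,v)+\beta$ for every $v\in V$. Its size is its number of edges. *)

(* Defs.v *)
From mathcomp Require Import all_boot.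
Set Implicit Arguments. Unset Strict Implicit. Unset Printing Implicit Defensive.

Definition temporal_graph (n : nat) (E : {set {set 'I_n}})
    (lam : {set 'I_n} -> nat) : Prop :=
  (forall e, e \in E -> #|e| = 2) /\ (forall e, e \in E -> 0 < lam e).

(* x :: p (p the list of vertices after the start u) is a temporal path from
   u to v in (E, lam): consecutive vertices are adjacent, vertices are
   pairwise distinct, and the labels of the traversed edges are
   non-decreasing in the order of traversal. *)
Definition is_tpath (n : nat) (E : {set {set 'I_n}}) (lam : {set 'I_n} -> nat)
    (u v : 'I_n) (p : seq 'I_n) : bool :=
  [&& last u p == v, uniq (u :: p),
      path (fun x y => [set x; y] \in E) u p &
      sorted leq (pairmap (fun x y => lam [set x; y]) u p)].

(* Simple paths have
   length < n, so searching lengths 0 .. n-1 suffices. *)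
Definition tdist (n : nat) (E : {set {set 'I_n}}) (lam : {set 'I_n} -> nat)
    (u v : 'I_n) : option nat :=
  let k := find (fun k => [exists p : k.-tuple 'I_n, is_tpath E lam u v p])
                (iota 0 n) in
  if k < n then Some k else None.

(* a <= b + beta in N u {+oo}, with None = +oo. *)
Definition ext_le_add (a b : option nat) (beta : nat) : bool :=
  match b with
  | None => true
  | Some y => match a with Some x => x <= y + beta | None => false end
  end.

Definition ss_additive_spanner (n : nat) (E : {set {set 'I_n}})
    (lam : {set 'I_n} -> nat) (s : 'I_n) (beta : nat) (EH : {set {set 'I_n}})
    : Prop :=
  EH \subset E /\ forall v : 'I_n, ext_le_add (tdist EH lam s v) (tdist E lam s v) beta.

(* Main.v *)
Require Import Defs.
From Stdlib Require Import ZArith Lia.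
From mathcomp Require Import all_boot zify.

Definition Aof (L D R : nat) := L + D * (R - 1).
Definition Bof (L D R : nat) := L + 2 * (D * (R - 1)).

Definition vidx (L D R r p : nat) : nat :=
  if p == 0 then 0
  else if p <= L then (if odd p then p + D * r else Aof L D R + p + 2 * (D * r))
  else Aof L D R + Bof L D R + 1 + r.

Lemma vidx_cases L D R r p : r < R -> p <= L.+1 ->
  let A := Aof L D R in let B := Bof L D R in
  (p = 0 /\ vidx L D R r p = 0)
  \/ (exists k, p = k.*2.+1 /\ p <= L /\ vidx L D R r p = p + D * r)
  \/ (exists k, p = k.*2.+2 /\ p <= L /\ vidx L D R r p = A + p + 2 * (D * r))
  \/ (p = L.+1 /\ vidx L D R r p = A + B + 1 + r).
Proof.
move=> hr hp A B; rewrite /vidx.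
case: eqP => [->|p0]; first by left.
case: leqP => hpL; last by do 3 right; split => //; apply/eqP; rewrite eqn_leq hp.
case: (boolP (odd p)) => op.
  right; left; exists p./2; split => //.
  by rewrite -[LHS](odd_double_half p) op.
right; right; left; exists (p./2).-1; split => //.
have := odd_double_half p; rewrite (negbTE op) add0n => hp2.
case: (p./2) hp2 => [|k] /= hk; first by exfalso; apply: p0; rewrite -hk.
by rewrite -hk.
Qed.

Lemma mulle D a b : a <= b -> D * a <= D * b.
Proof. by move=> h; rewrite leq_mul2l h orbT. Qed.

Lemma edge_kinds L D R r p : r < R -> p <= L -> 0 < L ->
  let A := Aof L D R in let B := Bof L D R in
  let X := vidx L D R r p in let Y := vidx L D R r p.+1 in
  D * r <= D * (R - 1) /\
  ((p = 0 /\ X = 0 /\ Y = 1 + D * r)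
  \/ (exists k, p = k.*2.+1 /\ p.+1 <= L /\ X = p + D * r /\ Y = A + p.+1 + 2 * (D * r))
  \/ (exists k, p = k.*2.+2 /\ p.+1 <= L /\ X = A + p + 2 * (D * r) /\ Y = p.+1 + D * r)
  \/ (p = L /\ 1 <= X <= A + B /\ Y = A + B + 1 + r)).
Proof.
move=> hr hp hL A B X Y.
have hDr : D * r <= D * (R - 1) by apply: mulle; lia.
split => //.
have c1 := vidx_cases L D R r p hr (leqW hp).
have c2 := vidx_cases L D R r p.+1 hr hp.
rewrite /A /B /X /Y /Aof /Bof in c1 c2 *.
case: c1 => [|[[k [? [? ?]]]|[[k [? [? ?]]]|[? ?]]]];
case: c2 => [|[[k' [? [? ?]]]|[[k' [? [? ?]]]|[? ?]]]];
first [lia | (left; lia) | (right; left; exists k; lia) | (right; right; left; exists k; lia) | (right; right; right; lia)].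
Qed.

Lemma vidx_edge_inj L D R r p r' p' : r < R -> r' < R -> p <= L -> p' <= L ->
  0 < L -> 3 <= D ->
  let X := vidx L D R r p in let Y := vidx L D R r p.+1 in
  let X' := vidx L D R r' p' in let Y' := vidx L D R r' p'.+1 in
  (X = X' /\ Y = Y') \/ (X = Y' /\ Y = X') -> r = r' /\ p = p'.
Proof.
move=> hr hr' hp hp' hL hD X Y X' Y'.
have [h1 k1] := edge_kinds L D R r p hr hp hL.
have [h2 k2] := edge_kinds L D R r' p' hr' hp' hL.
rewrite -/X -/Y in k1; rewrite -/X' -/Y' in k2.
rewrite /Aof /Bof in k1 k2.
have hcmp : (r < r' /\ D * r + D <= D * r') \/ r = r' \/ (r' < r /\ D * r' + D <= D * r).
  case: (ltngtP r r') => h.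
  - by left; split => //; rewrite addnC -mulnS; apply: mulle.
  - by right; right; split => //; rewrite addnC -mulnS; apply: mulle.
  - by right; left.
case: hcmp => [[? ?]|[?|[? ?]]]; try subst r';
case: k1 => [[? [? ?]]|[[k [? [? [? ?]]]]|[[k [? [? [? ?]]]]|[? [? ?]]]]];
case: k2 => [[? [? ?]]|[[k' [? [? [? ?]]]]|[[k' [? [? [? ?]]]]|[? [? ?]]]]];
lia.
Qed.

Definition posn (L D R l i : nat) : Z :=
  let z := (Z.of_nat l - 1)%Z in
  let A := Aof L D R in let B := Bof L D R in
  if i == 0 then 0%Z
  else if i <= A then (Z.of_nat i - Z.of_nat D * z)%Z
  else if i <= A + B then (Z.of_nat i - Z.of_nat A - 2 * Z.of_nat D * z)%Z
  else if i <= A + B + R then (Z.of_nat L + 1 + Z.of_nat D * (Z.of_nat i - Z.of_nat (A + B + 1) - z))%Z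
  else (- Z.of_nat D * z)%Z.

Lemma posn_desc L D R l l' i : i != 0 -> l <= l' ->
  (posn L D R l' i + Z.of_nat D * (Z.of_nat l' - Z.of_nat l) <= posn L D R l i)%Z.
Proof.
move=> /negbTE i0 hl; rewrite /posn i0.
case: ifP => _; first lia.
case: ifP => _; first nia.
case: ifP => _; lia.
Qed.

Lemma posn_vidx L D R r p : r < R -> p <= L.+1 ->
  posn L D R r.+1 (vidx L D R r p) = Z.of_nat p.
Proof.
move=> hr hp.
have hDr : D * r <= D * (R - 1) by apply: mulle; lia.
case: (vidx_cases L D R r p hr hp) => [[-> ->]|[[k [? [? ->]]]|[[k [? [? ->]]]|[-> ->]]]];
rewrite /posn /Aof /Bof.
- by [].
- have -> : (p + D * r == 0) = false by apply/negbTE; lia.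
  have -> : (p + D * r <= L + D * (R - 1)) = true by apply/idP; lia.
  lia.
- have -> : (L + D * (R - 1) + p + 2 * (D * r) == 0) = false by apply/negbTE; lia.
  have -> : (L + D * (R - 1) + p + 2 * (D * r) <= L + D * (R - 1)) = false by apply/negbTE; lia.
  have -> : (L + D * (R - 1) + p + 2 * (D * r) <= L + D * (R - 1) + (L + 2 * (D * (R - 1)))) = true by apply/idP; lia.
  lia.
- set A := L + D * (R - 1); set B := L + 2 * (D * (R - 1)).
  have -> : (A + B + 1 + r == 0) = false by apply/negbTE; lia.
  have -> : (A + B + 1 + r <= A) = false by apply/negbTE; lia.
  have -> : (A + B + 1 + r <= A + B) = false by apply/negbTE; lia.
  have -> : (A + B + 1 + r <= A + B + R) = true by apply/idP; lia.
  lia.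
Qed.

Module P4M.
Local Arguments Z.add : simpl never.
Local Arguments Z.sub : simpl never.
Local Arguments Z.mul : simpl never.
Local Arguments Z.of_nat : simpl never.
Local Arguments Z.abs : simpl never.

Lemma key_path (T : finType) (E : {set {set T}}) (lam : {set T} -> nat) (s : T)
  (pos : nat -> T -> Z) (D : nat)
  (Hedge : forall x y, [set x; y] \in E ->
     Z.abs (pos (lam [set x; y]) x - pos (lam [set x; y]) y) = 1%Z)
  (Hdesc : forall x l l', x != s -> l <= l' ->
     (pos l' x + Z.of_nat D * (Z.of_nat l' - Z.of_nat l) <= pos l x)%Z) :
  forall q u, path (fun x y => [set x; y] \in E) u q ->
    sorted leq (pairmap (fun x y => lam [set x; y]) u q) -> s \notin q -> q != [::] ->
    let ls := pairmap (fun x y => lam [set x; y]) u q in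
    (Z.of_nat (size q) + pos (head 0%N ls) u >=
      pos (last 0%N ls) (last u q) + Z.of_nat D * (Z.of_nat (last 0%N ls) - Z.of_nat (head 0%N ls)))%Z.
Proof.
elim=> [//|v q IH] u /= /andP [huv hp] hs hsn _.
have := Hedge _ _ huv.
case: q IH hp hs hsn => [|w q] IH hp hs hsn /=.
  lia.
move: hs => /= /andP [hle hs].
have hv : v != s by apply: contraNneq hsn => ->; rewrite inE eqxx.
have hsn' : s \notin w :: q by move: hsn; rewrite inE negb_or => /andP [].
have := IH v hp hs hsn' isT => /=.
have := Hdesc v _ _ hv hle.
lia.
Qed.

Lemma ivt_path (T : finType) (E : {set {set T}}) (lam : {set T} -> nat)
  (pos : nat -> T -> Z) (c : nat)
  (Hedge : forall x y, [set x; y] \in E ->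
     Z.abs (pos (lam [set x; y]) x - pos (lam [set x; y]) y) = 1%Z) :
  forall q u (p : Z), path (fun x y => [set x; y] \in E) u q ->
    all (fun l => l == c) (pairmap (fun x y => lam [set x; y]) u q) ->
    (pos c u <= p < pos c (last u q))%Z ->
    exists x y, [set x; y] \in E /\ lam [set x; y] = c /\ pos c x = p /\ pos c y = (p + 1)%Z.
Proof.
elim=> [|v q IH] u p /=; first lia.
move=> /andP [huv hp] /andP [/eqP hc ha] hb.
have := Hedge _ _ huv; rewrite hc => habs.
case: (Z_le_gt_dec (pos c v) p) => h.
  by apply: (IH v p hp ha); lia.
by exists u, v; split => //; split => //; lia.
Qed.

Lemma path_leq_last (a : nat) s : path leq a s -> a <= last a s.
Proof.
elim: s a => [//|b s IH] a /= /andP [h1 h2].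
exact: leq_trans h1 (IH _ h2).
Qed.

Lemma path_leq_const (a : nat) s : path leq a s -> last a s <= a -> all (fun x => x == a) s.
Proof.
elim: s a => [//|b s IH] a /= /andP [h1 h2] hl.
have hb := @path_leq_last _ _ h2.
have eab : b = a by apply/eqP; rewrite eqn_leq h1 (leq_trans hb hl).
subst b; rewrite eqxx /=; exact: IH.
Qed.

Lemma last_label (T : finType) (E : {set {set T}}) (lam : {set T} -> nat) (c : nat) :
  forall q u, path (fun x y => [set x; y] \in E) u q -> q != [::] ->
    (forall x, [set x; last u q] \in E -> lam [set x; last u q] = c) ->
    last 0 (pairmap (fun x y => lam [set x; y]) u q) = c.
Proof.
elim=> [//|v q IH] u /= /andP [huv hp] _.
case: q IH hp => [|w q] IH hp /= H; first exact: H.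
exact: (IH v hp isT H).
Qed.

End P4M.
Import P4M.

Lemma set2_eq (T : finType) (x y x' y' : T) :
  [set x; y] = [set x'; y'] -> (x = x' /\ y = y') \/ (x = y' /\ y = x').
Proof.
move=> h.
have hx : x \in [set x'; y'] by rewrite -h set21.
have hy : y \in [set x'; y'] by rewrite -h set22.
have hx' : x' \in [set x; y] by rewrite h set21.
have hy' : y' \in [set x; y] by rewrite h set22.
move: hx hy hx' hy'; rewrite !inE.
case/orP=> /eqP hx; case/orP=> /eqP hy; subst; rewrite ?eqxx /=.
- by move=> _ /orP [] /eqP ->; [left | right].
- by left.
- by right.
- by move=> /orP [] /eqP -> _; [right | left].
Qed.


Definition vv m L D R r p : 'I_m.+1 := inord (vidx L D R r p).
Definition ed m L D R r p : {set 'I_m.+1} := [set vv m L D R r p; vv m L D R r p.+1].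
Definition EE m L D R : {set {set 'I_m.+1}} :=
  [set ed m L D R (val rp.1) (val rp.2) | rp : 'I_R * 'I_L.+1].
Definition lamb m L D R (e : {set 'I_m.+1}) : nat :=
  if [pick rp : 'I_R * 'I_L.+1 | e == ed m L D R rp.1 rp.2] is Some rp then (val rp.1).+1 else 1.
Definition poss m L D R (l : nat) (x : 'I_m.+1) : Z := posn L D R l (nat_of_ord x).

Definition good m L D R := [/\ 0 < L, 3 <= D & Aof L D R + Bof L D R + R <= m].

Lemma vidx_le m L D R r p : good m L D R -> r < R -> p <= L.+1 -> vidx L D R r p <= m.
Proof.
case=> hL hD hm hr hp.
have hDr : D * r <= D * (R - 1) by apply: mulle; lia.
move: hm; rewrite /Aof /Bof => hm.
case: (vidx_cases L D R r p hr hp) => [[_ ->]|[[k [? [? ->]]]|[[k [? [? ->]]]|[_ ->]]]];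
rewrite /Aof /Bof; lia.
Qed.
Arguments vidx_le {m L D R r p}.

Lemma val_vv m L D R r p : good m L D R -> r < R -> p <= L.+1 ->
  nat_of_ord (vv m L D R r p) = vidx L D R r p.
Proof. by move=> g hr hp; rewrite /vv inordK // ltnS; apply: vidx_le. Qed.
Arguments val_vv {m L D R r p}.

Lemma poss_vv m L D R r p : good m L D R -> r < R -> p <= L.+1 ->
  poss m L D R r.+1 (vv m L D R r p) = Z.of_nat p.
Proof. by move=> g hr hp; rewrite /poss val_vv // posn_vidx. Qed.
Arguments poss_vv {m L D R r p}.

Lemma ed_inj m L D R r p r' p' : good m L D R -> r < R -> r' < R -> p <= L -> p' <= L ->
  ed m L D R r p = ed m L D R r' p' -> r = r' /\ p = p'.
Proof.
move=> g hr hr' hp hp' /set2_eq h.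
have [hL hD _] := g.
apply: (vidx_edge_inj L D R r p r' p' hr hr' hp hp' hL hD) => /=.
rewrite -(val_vv g hr (leqW hp)) -(val_vv g hr (hp : p.+1 <= L.+1)) -(val_vv g hr' (leqW hp')) -(val_vv g hr' (hp' : p'.+1 <= L.+1)).
by case: h => [[-> ->]|[-> ->]]; [left|right].
Qed.
Arguments ed_inj {m L D R r p r' p'}.

Lemma lamb_ed m L D R r p : good m L D R -> r < R -> p <= L ->
  lamb m L D R (ed m L D R r p) = r.+1.
Proof.
move=> g hr hp; rewrite /lamb.
case: pickP => [rp /eqP h|/(_ (Ordinal hr, Ordinal (hp : p < L.+1)))]; last by rewrite eqxx.
have [-> _] := ed_inj g hr (ltn_ord rp.1) hp (ltn_ord rp.2 : (rp.2 : nat) <= L) h.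
by [].
Qed.
Arguments lamb_ed {m L D R r p}.

Lemma EE_dec m L D R e : good m L D R -> e \in EE m L D R ->
  exists r p, [/\ r < R, p <= L, e = ed m L D R r p & lamb m L D R e = r.+1].
Proof.
move=> g /imsetP [[r p] _ ->] /=.
exists r, p; split => //; first exact: ltn_ord p.
by rewrite lamb_ed // -ltnS.
Qed.
Arguments EE_dec {m L D R e}.

Lemma ed_in m L D R r p : r < R -> p <= L -> ed m L D R r p \in EE m L D R.
Proof.
move=> hr hp; apply/imsetP; exists (Ordinal hr, Ordinal (hp : p < L.+1)) => //.
Qed.
Arguments ed_in {m L D R r p}.

Lemma EE_edge m L D R x y : good m L D R -> [set x; y] \in EE m L D R ->
  Z.abs (poss m L D R (lamb m L D R [set x; y]) x - poss m L D R (lamb m L D R [set x; y]) y) = 1%Z.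
Proof.
move=> g hin; have [r [p [hr hp he ->]]] := EE_dec g hin.
have h1 := poss_vv g hr (leqW hp); have h2 := poss_vv g hr (hp : p.+1 <= L.+1).
move/set2_eq: he => [[-> ->]|[-> ->]]; rewrite h1 h2; lia.
Qed.
Arguments EE_edge {m L D R x y}.

Lemma EE_desc m L D R x l l' : x != (ord0 : 'I_m.+1) -> l <= l' ->
  (poss m L D R l' x + Z.of_nat D * (Z.of_nat l' - Z.of_nat l) <= poss m L D R l x)%Z.
Proof.
move=> hx hl; apply: posn_desc => //.
Qed.
Arguments EE_desc {m L D R x l l'}.

Lemma vv0 m L D R r : vv m L D R r 0 = ord0.
Proof. by apply/val_inj; rewrite /vv /vidx /= inordK. Qed.
Arguments vv0 {m L D R r}.

Lemma ed_card m L D R r p : good m L D R -> r < R -> p <= L -> #|ed m L D R r p| = 2.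
Proof.
move=> g hr hp; rewrite /ed cards2.
case: eqP => // h.
have := poss_vv g hr (leqW hp); rewrite h (poss_vv g hr (hp : p.+1 <= L.+1)); lia.
Qed.
Arguments ed_card {m L D R r p}.

Lemma EE_cross m L D R x y r (p : nat) : good m L D R -> r < R -> p <= L ->
  [set x; y] \in EE m L D R -> lamb m L D R [set x; y] = r.+1 ->
  poss m L D R r.+1 x = Z.of_nat p -> poss m L D R r.+1 y = (Z.of_nat p + 1)%Z ->
  [set x; y] = ed m L D R r p.
Proof.
move=> g hr hp hin hl hx hy.
have [r' [p' [hr' hp' he hl']]] := EE_dec g hin.
have er : r' = r by rewrite hl in hl'; case: hl'.
subst r'; rewrite he.
have h1 := poss_vv g hr (leqW hp'); have h2 := poss_vv g hr (hp' : p'.+1 <= L.+1).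
have : p' = p.
  by move/set2_eq: he => [[ex ey]|[ex ey]]; move: hx hy; rewrite ex ey h1 h2; lia.
by move=> ->.
Qed.
Arguments EE_cross {m L D R x y r p}.

Lemma EE_target m L D R x r : good m L D R -> r < R ->
  [set x; vv m L D R r L.+1] \in EE m L D R -> lamb m L D R [set x; vv m L D R r L.+1] = r.+1.
Proof.
move=> g hr hin.
have [r' [p' [hr' hp' he ->]]] := EE_dec g hin.
have ht : vv m L D R r L.+1 \in ed m L D R r' p' by rewrite -he set22.
have hg := g; case: hg => hL hD hm.
have hDr : D * r' <= D * (R - 1) by apply: mulle; lia.
move: ht; rewrite !inE => /orP [] /eqP /(congr1 (@nat_of_ord _));
  rewrite !val_vv // ?leqW // /vidx /=; move: hm; rewrite /Aof /Bof => hm.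
- rewrite ltnn hp' /=; case: eqP => _; first lia.
  by case: ifP => _; lia.
- rewrite ltnn /=; case: ifP => h1; last lia.
  by case: ifP => _; lia.
Qed.
Arguments EE_target {m L D R x r}.

Lemma tdist_some n (E : {set {set 'I_n}}) lam u v k :
  tdist E lam u v = Some k -> exists p : k.-tuple 'I_n, is_tpath E lam u v p.
Proof.
rewrite /tdist.
set P := (fun k0 : nat => [exists p : k0.-tuple 'I_n, is_tpath E lam u v p]).
case: ifP => // hk [<-].
have : has P (iota 0 n) by rewrite has_find size_iota.
move/(nth_find 0); rewrite nth_iota // add0n.
by move/existsP.
Qed.

Lemma tdist_le n (E : {set {set 'I_n}}) lam u v k (p : k.-tuple 'I_n) :
  is_tpath E lam u v p -> k < n -> exists k', tdist E lam u v = Some k' /\ k' <= k.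
Proof.
move=> hp hk; rewrite /tdist.
set P := (fun k0 : nat => [exists p : k0.-tuple 'I_n, is_tpath E lam u v p]).
have hPk : P k by apply/existsP; exists p.
have hf : find P (iota 0 n) <= k.
  rewrite leqNgt; apply/negP => h.
  have := before_find 0 h; rewrite nth_iota // add0n hPk //.
have -> : find P (iota 0 n) < n by exact: leq_ltn_trans hf hk.
by exists (find P (iota 0 n)).
Qed.

Lemma band_path m L D R r : good m L D R -> r < R -> forall j k, k + j <= L.+1 ->
  let q := map (vv m L D R r) (iota k.+1 j) in
  [/\ path (fun x y => [set x; y] \in EE m L D R) (vv m L D R r k) q,
      all (fun l => l == r.+1) (pairmap (fun x y => lamb m L D R [set x; y]) (vv m L D R r k) q)
    & last (vv m L D R r k) q = vv m L D R r (k + j)].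
Proof.
move=> g hr; elim=> [|j IH] k hkj /=; first by rewrite addn0.
have hk : k <= L by lia.
have [h1 h2 h3] := IH k.+1 (ltac:(lia)).
split.
- by rewrite h1 andbT; exact: (ed_in hr hk).
- by rewrite h2 andbT; rewrite (lamb_ed g hr hk).
- by rewrite h3 addSnnS.
Qed.

Arguments band_path {m L D R r}.
Arguments key_path {T E lam s pos D}.
Arguments ivt_path {T E lam pos c}.
Arguments last_label {T E lam c q u}.
Arguments path_leq_last {a s}.
Arguments path_leq_const {a s}.
Arguments tdist_some {n E lam u v k}.
Arguments tdist_le {n E lam u v k p}.

Lemma all_sorted (c : nat) s : all (fun l => l == c) s -> sorted leq s.
Proof.
elim: s => [//|a [|b s] IH] //=.
move=> /and3P [/eqP ha /eqP hb h]; rewrite ha hb leqnn /=.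
by move: (IH (ltac:(by rewrite /= hb eqxx h))) => /=; rewrite hb.
Qed.

Lemma forced m L D R beta r p (EH : {set {set 'I_m.+1}}) :
  good m L D R -> beta < D -> r < R -> p <= L -> L.+1 < m.+1 ->
  ss_additive_spanner (EE m L D R) (lamb m L D R) ord0 beta EH ->
  ed m L D R r p \in EH.
Proof.
move=> g hb hr hp hLm [hsub hsp].
set t := vv m L D R r L.+1.
have [h1 h2 h3] := band_path g hr L.+1 0 (leqnn _).
set q := map (vv m L D R r) (iota 1 L.+1) in h1 h2 h3.
have hsq : size q == L.+1 by rewrite size_map size_iota.
have hu : uniq (vv m L D R r 0 :: q).
  have -> : vv m L D R r 0 :: q = map (vv m L D R r) (iota 0 L.+2) by [].
  rewrite map_inj_in_uniq ?iota_uniq //.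
  move=> a b; rewrite !mem_iota !add0n => ha hb' /(congr1 (poss m L D R r.+1)).
  rewrite !poss_vv //; lia.
have hG : is_tpath (EE m L D R) (lamb m L D R) ord0 t (Tuple hsq).
  rewrite /is_tpath; have -> : tval (Tuple hsq) = q by [].
  by rewrite -(@vv0 m L D R r) h3 add0n eqxx h1 (all_sorted _ _ h2) hu.
have [k [hk hkL]] := tdist_le hG hLm.
have := hsp t; rewrite hk /=.
case hH : (tdist EH (lamb m L D R) ord0 t) => [x|] // hx.
have [qH hqH] := tdist_some hH.
move: hqH; rewrite /is_tpath => /and4P [/eqP hlast huniq hpath hsorted].
have hs : ord0 \notin (qH : seq _) by move: huniq => /= /andP [].
have hne : (qH : seq _) != [::].
  case: (tval qH) hlast => [|a l] // /= /(congr1 (poss m L D R r.+1)).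
  by rewrite /t poss_vv // /poss /=.
have HedgeH : forall a b, [set a; b] \in EH ->
   Z.abs (poss m L D R (lamb m L D R [set a; b]) a - poss m L D R (lamb m L D R [set a; b]) b) = 1%Z.
  by move=> a b hab; apply: EE_edge g (subsetP hsub _ hab).
have Hdesc := fun a l l' (ha : a != ord0) hl => @EE_desc m L D R a l l' ha hl.
have hkey := key_path HedgeH Hdesc _ _ hpath hsorted hs hne.
have hlastl : last 0%N (pairmap (fun x y => lamb m L D R [set x; y]) ord0 qH) = r.+1.
  apply: last_label hpath hne _ => a; rewrite hlast => ha.
  exact: EE_target g hr (subsetP hsub _ ha).
set ls := pairmap (fun x y => lamb m L D R [set x; y]) ord0 qH in hkey hlastl hsorted.
cbv zeta in hkey.
rewrite hlastl hlast /t poss_vv // in hkey.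
have hsz : size qH = x by rewrite size_tuple.
rewrite hsz /poss in hkey.
change (nat_of_ord (ord0 : 'I_m.+1)) with 0%N in hkey.
have hp0 : forall l, posn L D R l 0 = 0%Z by [].
rewrite hp0 in hkey.
have ls_ne : ls = head 0%N ls :: behead ls.
  by rewrite /ls; case: (tval qH) hne.
have hhead : head 0%N ls = r.+1.
  have hle : head 0%N ls <= r.+1.
    rewrite -hlastl ls_ne /=; move: hsorted; rewrite ls_ne /=.
    exact: path_leq_last.
  have : ~ (head 0%N ls < r.+1).
    move=> hlt.
    have : (Z.of_nat D * (Z.of_nat r.+1 - Z.of_nat (head 0%N ls)) >= Z.of_nat D)%Z by nia.
    lia.
  lia.
have hall : all (fun l => l == r.+1) ls.
  rewrite ls_ne /= hhead eqxx /=.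
  apply: path_leq_const.
    by move: hsorted; rewrite ls_ne hhead.
  by move: hlastl; rewrite ls_ne hhead /= => ->.
have hz : poss m L D R r.+1 ord0 = 0%Z by [].
have ht' : poss m L D R r.+1 (last ord0 qH) = Z.of_nat L.+1 by rewrite hlast /t poss_vv.
have hrange : (poss m L D R r.+1 ord0 <= Z.of_nat p < poss m L D R r.+1 (last ord0 qH))%Z.
  rewrite hz ht'; lia.
have [a [b [hab [hlab [ha hb']]]]] := ivt_path HedgeH _ _ _ hpath hall hrange.
by rewrite -(EE_cross g hr hp (subsetP hsub _ hab) hlab ha hb').
Qed.

Theorem theorem13 :
  exists c n0 : nat, 0 < c /\
    forall (n beta : nat), 0 < n -> n0 <= n ->
      exists (E : {set {set 'I_n}}) (lam : {set 'I_n} -> nat) (s : 'I_n),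
        temporal_graph E lam /\
        forall EH : {set {set 'I_n}}, ss_additive_spanner E lam s beta EH ->
          n ^ 2 <= c * (1 + beta) * #|EH|.
Proof.
exists 192, 8; split => // n beta n0 hn8.
case: n n0 hn8 => [//|m] _ hn8.
set D := beta + 3.
set L := m.+1 %/ 4.
set Q := m.+1 %/ (16 * D).
set R := Q + 1.
have hQ : Q * (16 * D) <= m.+1 by apply: leq_divM.
have hQ' : m.+1 < Q.+1 * (16 * D) by apply: ltn_ceil; lia.
have hL : L * 4 <= m.+1 by apply: leq_divM.
have hL' : m.+1 < L.+1 * 4 by apply: ltn_ceil.
have hDQ : 3 * Q <= D * Q by apply: leq_mul => //; lia.
have hR1 : R - 1 = Q by rewrite /R addnK.
have g : good m L D R.
  split; [lia | lia |].
  rewrite /Aof /Bof hR1 /R; lia.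
exists (EE m L D R), (lamb m L D R), ord0; split.
  split => e he.
    by have [r [p [hr hp -> _]]] := EE_dec g he; rewrite ed_card.
  by rewrite /lamb; case: pickP.
move=> EH hsp.
have hsub : EE m L D R \subset EH.
  apply/subsetP => e /imsetP [[r p] _ ->] /=.
  move: (ltn_ord p) => hp; apply: (@forced m L D R beta r p EH g _ (ltn_ord r) _ _ hsp); rewrite /D; lia.
have hcard : #|EE m L D R| = R * L.+1.
  rewrite /EE card_imset ?card_prod ?card_ord //.
  move=> [r p] [r' p'] /= h.
  have [e1 e2] := ed_inj g (ltn_ord r) (ltn_ord r') (ltn_ord p : (p : nat) <= L) (ltn_ord p' : (p' : nat) <= L) h.
  by congr pair; apply: val_inj.
have hEH : R * L.+1 <= #|EH| by rewrite -hcard; apply: subset_leq_card.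
rewrite -mulnn.
have h1 : m.+1 * m.+1 <= (L.+1 * 4) * (R * (16 * D)).
  by apply: leq_mul; apply: ltnW => //; rewrite /R addn1.
apply: (leq_trans h1).
have -> : L.+1 * 4 * (R * (16 * D)) = 64 * D * (R * L.+1) by lia.
have hD3 : D <= 3 * (1 + beta) by rewrite /D; lia.
have h2 : 64 * D * (R * L.+1) <= 64 * (3 * (1 + beta)) * #|EH|.
  by apply: leq_mul => //; apply: leq_mul.
apply: (leq_trans h2); lia.
Qed.
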